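(* Let $\widehat{X}=X+\epsilon X_0$ and $\widehat{Y}=Y+\epsilon Y_0$ be dual matrices such that the dual group generalized inverse of $\widehat{X}$ exists. Then $\widehat{X}\leq_{D}^{\#}\widehat{Y}$ if and only if $X\leq^{\#}Y$, $\quad X^{\#}X_0+RX= X^{\#}Y_0+RY$, $\quad XR+X_0X^{\#}= YR+Y_0X^{\#}$, where $R=-X^{\#}X_0X^{\#}+(X^{\#})^2X_0(I-XX^{\#})+(I-XX^{\#})X_0(X^{\#})^2$.
   Context: Dual matrices have the form $X+\epsilon X_0$ with real square matrices $X,X_0$ and dual unit $\epsilon\neq0$, $\epsilon^2=0$. For a dual matrix $\widehat{X}$ of dual index 1, the dual group generalized inverse $\widehat{X}^{\#}$ is the unique dual matrix $\widehat{Z}$ (if it exists) with $\widehat{X}\widehat{Z}\widehat{X}=\widehat{X}$, $\widehat{Z}\widehat{X}\widehat{Z}=\widehat{Z}$, $\widehat{X}\widehat{Z}=\widehat{Z}\widehat{X}$; when it exists, $\widehat{X}^{\#}=X^{\#}+\epsilon R$ with $R$ as in the claim, where $X^{\#}$ is the group inverse of $X$. The D-group order is defined by $\widehat{X}\leq_{D}^{\#}\widehat{Y}$ iff $\widehat{X}^{\#}\widehat{X}=\widehat{X}^{\#}\widehat{Y}$ and $\widehat{X}\widehat{X}^{\#}=\widehat{Y}\widehat{X}^{\#}$. For real matrices, the group partial order $X\leq^{\#}Y$ means $X^{\#}X=X^{\#}Y$ and $XX^{\#}=YX^{\#}$. *)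

(* Defs.v *)
From mathcomp Require Import all_boot all_order all_algebra.
Set Implicit Arguments. Unset Strict Implicit. Unset Printing Implicit Defensive.
Import GRing.Theory Num.Theory.
Local Open Scope ring_scope.

(* Dual matrices X + eps X0 are represented as pairs (X, X0)
   of n x n matrices over a real field R. *)
Section Dual.
Variables (R : realFieldType) (n : nat).

Definition dualmx := ('M[R]_n * 'M[R]_n)%type.

(* (A + eps A0)(B + eps B0) = AB + eps (A B0 + A0 B), since eps^2 = 0 *)
Definition dmul (A B : dualmx) : dualmx :=
  (A.1 *m B.1, A.1 *m B.2 + A.2 *m B.1).

Definition is_group_inverse (X Z : 'M[R]_n) : Prop :=
  [/\ X *m Z *m X = X, Z *m X *m Z = Z & X *m Z = Z *m X].

Definition is_dual_group_inverse (Xh Zh : dualmx) : Prop :=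
  [/\ dmul (dmul Xh Zh) Xh = Xh, dmul (dmul Zh Xh) Zh = Zh
    & dmul Xh Zh = dmul Zh Xh].

Definition group_order (X Y : 'M[R]_n) : Prop :=
  exists Xg, is_group_inverse X Xg /\
    Xg *m X = Xg *m Y /\ X *m Xg = Y *m Xg.

Definition dgroup_order (Xh Yh : dualmx) : Prop :=
  exists Zh, is_dual_group_inverse Xh Zh /\
    dmul Zh Xh = dmul Zh Yh /\ dmul Xh Zh = dmul Yh Zh.

Definition Rterm (X X0 Xg : 'M[R]_n) : 'M[R]_n :=
  - (Xg *m X0 *m Xg) + Xg *m Xg *m X0 *m (1%:M - X *m Xg)
  + (1%:M - X *m Xg) *m X0 *m (Xg *m Xg).

End Dual.

(* Main.v *)
Require Import Defs.
Set Warnings "-all".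
From mathcomp Require Import all_boot all_order all_algebra.
Import GRing.Theory Num.Theory.
Local Open Scope ring_scope.

Lemma ginv_unique (R : realFieldType) (n : nat) (X Z G : 'M[R]_n) :
  is_group_inverse X Z -> is_group_inverse X G -> Z = G.
Proof.
case=> z1 z2 z3 [g1 g2 g3].
have PQP : X *m Z = X *m G *m (X *m Z) by rewrite mulmxA g1.
have QPQ : X *m G = X *m Z *m (X *m G) by rewrite mulmxA z1.
have PPQ : X *m Z = X *m Z *m (X *m G).
  by rewrite z3 g3 -[Z *m X *m _]mulmxA [X *m (G *m X)]mulmxA g1.
have QQP : X *m G = X *m G *m (X *m Z).
  by rewrite g3 z3 -[G *m X *m _]mulmxA [X *m (Z *m X)]mulmxA z1.
have PQ : X *m Z = X *m G by rewrite PQP -QQP.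
by rewrite -z2 -z3 PQ g3 -mulmxA PQ mulmxA g2.
Qed.
Lemma zL1 (V : zmodType) (a k u v a' u' : V) :
  a + k = u + v -> a' + k = u' + v -> a - a' = u - u'.
Proof.
have E x y z : x - y = (x + z) - (y + z) :> V by rewrite opprD addrACA subrr addr0.
by move=> e1 e2; rewrite (E a a' k) e1 e2 -E.
Qed.

Lemma zL2 (V : zmodType) (a b : V) : a + b + a = a -> b = - a.
Proof.
move=> e; apply/eqP; rewrite -subr_eq0 opprK.
have -> : b + a = a + b + a - a by rewrite addrK addrC.
by rewrite e subrr.
Qed.

Lemma zL3 (V : zmodType) (a b c : V) : b + (-a + c) = a + (b - a) + (c - a).
Proof. by rewrite [a + _]addrC addrNK [-a + c]addrC. Qed.

Lemma key (R : realFieldType) (n : nat) (X X0 G Z0 : 'M[R]_n) :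
  is_group_inverse X G ->
  G *m X *m Z0 + (G *m X0 + Z0 *m X) *m G = Z0 ->
  X *m Z0 + X0 *m G = G *m X0 + Z0 *m X -> Z0 = Rterm X X0 G.
Proof.
case=> h1 h2 h3 hb hc.
rewrite /Rterm.
have hPX : X *m G *m X = X by [].
have hXP : X *m (X *m G) = X by rewrite h3 mulmxA h1.
have hGP : G *m (X *m G) = G by rewrite mulmxA h2.
have hPG : X *m G *m G = G by rewrite h3 h2.
have hPP : X *m G *m (X *m G) = X *m G by rewrite mulmxA hPX.
rewrite -h3 in hb.
set P := X *m G in hPX hXP hGP hPG hPP hb h1 h2 h3 *.
have hXG : X *m G = P by [].
clearbody P.
have hXGl k (A : 'M_(k, n)) : A *m X *m G = A *m P by rewrite -mulmxA hXG.
have hPXl A : A *m P *m X = A *m X by rewrite -mulmxA hPX.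
have hXPl A : A *m X *m P = A *m X by rewrite -mulmxA hXP.
have hGPl A : A *m G *m P = A *m G by rewrite -mulmxA hGP.
have hPGl A : A *m P *m G = A *m G by rewrite -mulmxA hPG.
have hPPl A : A *m P *m P = A *m P by rewrite -mulmxA hPP.
have hGXl A : A *m G *m X = A *m P by rewrite -mulmxA -h3.
have hGX : G *m X = P by rewrite -h3.
have F1 : G *m X0 *m G = - (P *m Z0 *m P).
  apply: zL2; have := congr1 (fun M => P *m M *m P) hb.
  rewrite /= !(mulmxDr, mulmxDl) !mulmxA.
  rewrite ?(hPP, hPPl, hPG, hPGl, hGP, hGPl, hPX, hPXl, hXP, hXPl, hGX, hGXl, hXG, hXGl). by rewrite addrA.
have F2 : P *m Z0 - P *m Z0 *m P = G *m G *m X0 - G *m G *m X0 *m P.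
  have e1 := congr1 (fun M => G *m M) hc.
  have e2 := congr1 (fun M => G *m M *m P) hc.
  move: e1 e2; rewrite /= !(mulmxDr, mulmxDl) !mulmxA.
  rewrite ?(hPP, hPPl, hPG, hPGl, hGP, hGPl, hPX, hPXl, hXP, hXPl, hGX, hGXl, hXG, hXGl).
  exact: zL1.
have F3 : Z0 *m P - P *m Z0 *m P = X0 *m G *m G - P *m X0 *m G *m G.
  have e1 := congr1 (fun M => M *m G) hc.
  have e2 := congr1 (fun M => P *m M *m G) hc.
  move: e1 e2; rewrite /= !(mulmxDr, mulmxDl) !mulmxA.
  rewrite ?(hPP, hPPl, hPG, hPGl, hGP, hGPl, hPX, hPXl, hXP, hXPl, hGX, hGXl, hXG, hXGl).
  move=> e1 e2.
  rewrite [X *m Z0 *m G + _]addrC [G *m X0 *m G + _]addrC in e1.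
  rewrite [X *m Z0 *m G + _]addrC [G *m X0 *m G + _]addrC in e2.
  by apply/esym; exact: zL1 e1 e2.
rewrite !mulmxBr !mulmxBl !mulmx1 !mul1mx ?mulmxA -F2 -F3 F1 opprK.
rewrite -{1}hb mulmxDl ?mulmxA hXGl F1.
exact: zL3.
Qed.


Lemma dual_unique (R : realFieldType) (n : nat) (X X0 G : 'M[R]_n) (Zh : dualmx R n) :
  is_dual_group_inverse (X, X0) Zh -> is_group_inverse X G ->
  Zh = (G, Rterm X X0 G).
Proof.
case: Zh => Z Z0 [] /=; rewrite /dmul /= => -[a1 a2] [b1 b2] [c1 c2] hG.
have hZ : Z = G by apply: ginv_unique hG; split.
subst Z; congr pair.
exact: key hG b2 c2.
Qed.

Theorem mainTheorem12 (R : realFieldType) (n : nat) (X X0 Y Y0 Xg : 'M[R]_n) :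
  (exists Zh : dualmx R n, is_dual_group_inverse (X, X0) Zh) ->
  is_group_inverse X Xg ->
  let Rm := Rterm X X0 Xg in
  dgroup_order (X, X0) (Y, Y0) <->
  [/\ group_order X Y,
      Xg *m X0 + Rm *m X = Xg *m Y0 + Rm *m Y
    & X *m Rm + X0 *m Xg = Y *m Rm + Y0 *m Xg].
Proof.
move=> [Zh hZh] hG Rm.
have eZ := @dual_unique _ _ _ _ _ _ hZh hG.
split.
  move=> [Zh' [hZh' [e1 e2]]].
  rewrite (@dual_unique _ _ _ _ _ _ hZh' hG) /dmul /= in e1 e2.
  case: e1 => e11 e12; case: e2 => e21 e22.
  by split=> //; exists Xg.
move=> [[Xg' [hG' [f1 f2]]] e1 e2].
have eG : Xg' = Xg by exact: (@ginv_unique _ _ _ _ _ hG' hG).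
subst Xg'.
exists Zh; split=> //.
by rewrite eZ /dmul /= f1 f2 e1 e2.
Qed.
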